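(* Let $\beta\in(1,3/2)$ and let $\mu$ be an arbitrary Borel probability measure on $S_\beta$. Then $$(m_1\otimes m_2\otimes\mu)\circ K_\beta^{-1}=(m_1\otimes m_2\otimes\mu)\circ R_\beta^{-1}=m_1\otimes m_2\otimes\nu,$$ where $\nu=ps\,\mu\circ\tau_1^{-1}+pt\,\mu\circ\tau_2^{-1}+p(1-s-t)\,\mu\circ\tau_3^{-1}+(1-p)s\,\mu\circ\tau_4^{-1}+(1-p)t\,\mu\circ\tau_5^{-1}+(1-p)(1-s-t)\,\mu\circ\tau_6^{-1}$.
   Context: $\vec q_0=(0,0)$, $\vec q_1=(1,0)$, $\vec q_2=(0,1)$; $S_\beta$ is the attractor of the IFS $f_{\vec q_i}(\vec z)=(\vec z+\vec q_i)/\beta$, here the closed triangle with vertices $(0,0)$, $(\frac1{\beta-1},0)$, $(0,\frac1{\beta-1})$. Subsets of $S_\beta$: $E_0=[0,\frac1\beta)\times[0,\frac1\beta)$; $E_1=\{0\le y<\frac1\beta,\ \frac{1}{\beta(\beta-1)}<x+y\le\frac{1}{\beta-1}\}$; $E_2=\{0\le x<\frac1\beta,\ \frac{1}{\beta(\beta-1)}<x+y\le\frac{1}{\beta-1}\}$; $C_{01}=\{x\ge\frac1\beta,\ 0\le y<\frac1\beta,\ x+y\le\frac{1}{\beta(\beta-1)}\}$; $C_{12}=\{x\ge\frac1\beta,\ y\ge\frac1\beta,\ \frac{1}{\beta(\beta-1)}<x+y\le\frac{1}{\beta-1}\}$; $C_{02}=\{0\le x<\frac1\beta,\ y\ge\frac1\beta,\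 x+y\le\frac{1}{\beta(\beta-1)}\}$; $C_{012}=\{x\ge\frac1\beta,\ y\ge\frac1\beta,\ x+y\le\frac{1}{\beta(\beta-1)}\}$. Maps $\tau_k(\vec z)=\beta\vec z-a_k(\vec z)$, $k=1,\ldots,6$: $a_k=\vec q_i$ on $E_i$; on $C_{ij}$ ($ij\in\{01,12,02\}$) $a_k=\vec q_i$ for $k\le3$ and $\vec q_j$ for $k\ge4$; on $C_{012}$, $a_k=\vec q_0$ for $k\in\{1,4\}$, $\vec q_1$ for $k\in\{2,5\}$, $\vec q_2$ for $k\in\{3,6\}$. For a measure $\mu$, $\mu\circ\tau_k^{-1}$ denotes $A\mapsto\mu(\tau_k^{-1}(A))$. $\Omega=\{0,1\}^{\mathbb N}$, $\Upsilon=\{0,1,2\}^{\mathbb N}$ with product $\sigma$-algebras and left shifts $\sigma,\sigma'$. Fix $p\in(0,1)$, $s,t>0$, $s+t<1$; $m_1$ is the product measure on $\Omega$ with weights $p$ (symbol $0$) and $1-p$ (symbol $1$); $m_2$ is the product measure on $\Upsilon$ with weights $s,t,1-s-t$ on symbols $0,1,2$. $K_\beta$ on $\Omega\times\Upsilon\times S_\beta$: $K_\beta(\omega,\upsilon,\vec z)=(\omega,\upsilon,\beta\vec z-\vec q_i)$ if $\vec z\in E_i$; $(\sigma\omega,\upsilon,\beta\vec z-\vec q_i)$ if $\omega_1=0$, $\vec z\in C_{ij}$; $(\sigma\omega,\upsilon,\beta\vec z-\vec q_j)$ if $\omega_1=1$, $\vec z\in C_{ij}$; $(\omega,\sigma'\upsilon,\beta\vec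 z-\vec q_i)$ if $\vec z\in C_{012}$, $\upsilon_1=i$. $R_\beta$ on $\Omega\times\Upsilon\times S_\beta$: $R_\beta(\omega,\upsilon,\vec z)=(\sigma\omega,\sigma'\upsilon,\tau_k(\vec z))$ with $k=3\omega_1+\upsilon_1+1$ (i.e. $(\omega_1,\upsilon_1)=(0,0),(0,1),(0,2),(1,0),(1,1),(1,2)$ give $k=1,\ldots,6$). *)

(* Defs.v *)
From HB Require Import structures.
From mathcomp Require Import all_boot all_order all_algebra.
From mathcomp Require Import all_classical all_reals all_analysis.
Set Implicit Arguments. Unset Strict Implicit. Unset Printing Implicit Defensive.
Import Order.TTheory GRing.Theory Num.Theory.
Local Open Scope classical_set_scope.
Local Open Scope ring_scope.

Definition coord_sets (A : Type) : set (set (nat -> A)) :=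
  [set C | exists n a, C = [set w | w n = a]].

(* Omega = {0,1}^N (symbol 0 = false, symbol 1 = true), index 0 = first symbol *)
Definition Omega := g_sigma_algebraType (@coord_sets bool).
(* 'I_3 is pointed (needed for the generated sigma-algebra) *)
HB.instance Definition _ := isPointed.Build 'I_3 ord0.
Definition Upsilon := g_sigma_algebraType (@coord_sets 'I_3).

Definition shift (A : Type) (w : nat -> A) : nat -> A := fun n => w n.+1.

Definition is_product_measure (A : Type) (R : realType)
    (wt : A -> R) (m : set (nat -> A) -> \bar R) : Prop :=
  forall (n : nat) (a : 'I_n -> A),
    m [set w | forall i : 'I_n, w i = a i] = (\prod_(i < n) wt (a i))%:E.

Definition wt1 (R : realType) (p : R) (b : bool) : R := if b then 1 - p else p.
Definition wt2 (R : realType) (s t : R) (i : 'I_3) : R :=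
  if val i == 0%N then s else if val i == 1%N then t else 1 - s - t.

Section Pieces.
Variables (R : realType) (b : R).
Implicit Types z : (R * R)%type.

Definition S_beta : set (R * R) :=
  [set z | 0 <= z.1 /\ 0 <= z.2 /\ z.1 + z.2 <= (b - 1)^-1].

Definition c1 : R := (b * (b - 1))^-1.
Definition c2 : R := (b - 1)^-1.

Definition inE0 z := [&& 0 <= z.1, z.1 < b^-1, 0 <= z.2 & z.2 < b^-1].
Definition inE1 z := [&& 0 <= z.2, z.2 < b^-1, c1 < z.1 + z.2 & z.1 + z.2 <= c2].
Definition inE2 z := [&& 0 <= z.1, z.1 < b^-1, c1 < z.1 + z.2 & z.1 + z.2 <= c2].
Definition inC01 z := [&& b^-1 <= z.1, 0 <= z.2, z.2 < b^-1 & z.1 + z.2 <= c1].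
Definition inC12 z := [&& b^-1 <= z.1, b^-1 <= z.2, c1 < z.1 + z.2 & z.1 + z.2 <= c2].
Definition inC02 z := [&& 0 <= z.1, z.1 < b^-1, b^-1 <= z.2 & z.1 + z.2 <= c1].
Definition inC012 z := [&& b^-1 <= z.1, b^-1 <= z.2 & z.1 + z.2 <= c1].

Definition q (i : nat) : R * R :=
  if i == 0%N then (0, 0) else if i == 1%N then (1, 0) else (0, 1).

Definition bmap z (v : R * R) : R * R := (b * z.1 - v.1, b * z.2 - v.2).

(* a_k(z), k = 1..6; outside S_beta (irrelevant) we put q_0 *)
Definition a_k (k : nat) z : R * R :=
  if inE0 z then q 0 else if inE1 z then q 1 else if inE2 z then q 2
  else if inC01 z then (if (k <= 3)%N then q 0 else q 1)
  else if inC12 z then (if (k <= 3)%N then q 1 else q 2)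
  else if inC02 z then (if (k <= 3)%N then q 0 else q 2)
  else if inC012 z then
    (if (k %% 3 == 1)%N then q 0 else if (k %% 3 == 2)%N then q 1 else q 2)
  else q 0.

Definition tau (k : nat) z : R * R := bmap z (a_k k z).

Definition bit (x : bool) : nat := if x then 1%N else 0%N.

(* K_beta; outside S_beta (a null set for the measures considered) identity *)
Definition Kmap (x : (Omega * Upsilon * (R * R))%type) : (Omega * Upsilon * (R * R))%type :=
  let: (om, up, z) := x in
  if inE0 z then (om, up, bmap z (q 0))
  else if inE1 z then (om, up, bmap z (q 1))
  else if inE2 z then (om, up, bmap z (q 2))
  else if inC01 z then (shift om, up, bmap z (if om 0%N then q 1 else q 0))
  else if inC12 z then (shift om, up, bmap z (if om 0%N then q 2 else q 1))
  else if inC02 z then (shift om, up, bmap z (if om 0%N then q 2 else q 0))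
  else if inC012 z then (om, shift up, bmap z (q (val (up 0%N))))
  else (om, up, z).

Definition Rmap (x : (Omega * Upsilon * (R * R))%type) : (Omega * Upsilon * (R * R))%type :=
  let: (om, up, z) := x in
  (shift om, shift up, tau (3 * bit (om 0%N) + val (up 0%N) + 1) z).

End Pieces.

(* Main.v *)
Require Import Defs.
From HB Require Import structures.
From mathcomp Require Import all_boot all_order all_algebra.
From mathcomp Require Import all_classical all_reals all_analysis.
From mathcomp Require Import ring lra measurable_realfun.
Import Order.TTheory GRing.Theory Num.Theory.
Local Open Scope classical_set_scope.
Local Open Scope ring_scope.
Set Implicit Arguments. Unset Strict Implicit. Unset Printing Implicit Defensive.
Section Reg.
Variables (R : realType) (b : R).
Implicit Types z : (R * R)%type.

Definition reg z : nat :=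
  (if inE0 b z then 0 else if inE1 b z then 1 else if inE2 b z then 2
  else if inC01 b z then 3 else if inC12 b z then 4 else if inC02 b z then 5
  else if inC012 b z then 6 else 7)%N.

Definition aidx (k r : nat) : nat :=
  (match r with
  | 0 => 0 | 1 => 1 | 2 => 2
  | 3 => if (k <= 3)%N then 0 else 1
  | 4 => if (k <= 3)%N then 1 else 2
  | 5 => if (k <= 3)%N then 0 else 2
  | 6 => if (k %% 3 == 1)%N then 0 else if (k %% 3 == 2)%N then 1 else 2
  | _ => 0 end)%N.

Lemma a_k_reg k z : a_k b k z = q R (aidx k (reg z)).
Proof.
rewrite /a_k /reg.
case: (inE0 b z) => //; case: (inE1 b z) => //; case: (inE2 b z) => //;
case: (inC01 b z); first by rewrite /=; case: ifP.
case: (inC12 b z); first by rewrite /=; case: ifP.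
case: (inC02 b z); first by rewrite /=; case: ifP.
case: (inC012 b z) => //=. by case: ifP => //; case: ifP.
Qed.

Lemma tau_reg k z : tau b k z = bmap b z (q R (aidx k (reg z))).
Proof. by rewrite /tau a_k_reg. Qed.

Lemma reg_lt8 z : (reg z < 8)%N.
Proof. by rewrite /reg; repeat case: ifP. Qed.

Lemma reg7 z : S_beta b z -> reg z != 7%N.
Proof.
case=> x0 [y0 s2].
rewrite /reg /inE0 /inE1 /inE2 /inC01 /inC12 /inC02 /inC012 x0 y0 /=.
have [xl|xl] := ltP z.1 b^-1; have [yl|yl] := ltP z.2 b^-1 => //=;
have [sl|sl] := leP (z.1 + z.2) (c1 b) => //=;
by rewrite /c2 s2.
Qed.

End Reg.
Section Maps.
Variables (R : realType) (b : R).
Definition kk (bb : bool) (j : 'I_3) : nat := (3 * bit bb + val j + 1)%N.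
Definition sOm (r : nat) : bool := [|| r == 3, r == 4 | r == 5]%N.
Definition TT := (Omega * Upsilon * (R * R))%type.
Definition hK (r : nat) (bb : bool) (j : 'I_3) (x : TT) : TT :=
  let: (om, up, z) := x in
  (if sOm r then Defs.shift om else om, if r == 6%N then Defs.shift up else up,
   if r == 7%N then z else bmap b z (q R (aidx (kk bb j) r))).
Definition hR (r : nat) (bb : bool) (j : 'I_3) (x : TT) : TT :=
  let: (om, up, z) := x in
  (Defs.shift om, Defs.shift up, bmap b z (q R (aidx (kk bb j) r))).

Lemma Kmap_h (x : TT) : Kmap b x = hK (reg b x.2) (x.1.1 0%N) (x.1.2 0%N) x.
Proof.
case: x => [[om up] z]; rewrite /Kmap /hK /reg /=.
case: (om 0%N); case: (up 0%N) => [[|[|[|//]]] ?];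
repeat case: ifP => //.
Qed.

Lemma Rmap_h (x : TT) : Rmap b x = hR (reg b x.2) (x.1.1 0%N) (x.1.2 0%N) x.
Proof.
case: x => [[om up] z]; rewrite /Rmap /hR /= tau_reg.
by case: (om 0%N); case: (up 0%N) => [[|[|[|//]]] ?].
Qed.
End Maps.
Section MeasR.
Variable (R : realType).
Implicit Types z : (R * R)%type.

Lemma mpre (f : (R * R)%type -> R) (i : interval R) :
  measurable_fun setT f -> measurable (f @^-1` [set` i]).
Proof.
move=> mf; rewrite -[X in measurable X]setTI; apply: mf => //.
Qed.

Lemma mle (f : (R * R)%type -> R) (c : R) : measurable_fun setT f -> measurable [set z | f z <= c].
Proof.
move=> mf; have := mpre `]-oo, c] mf.
by congr measurable; apply/seteqP; split => z /=; rewrite in_itv.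
Qed.
Lemma mlt (f : (R * R)%type -> R) (c : R) : measurable_fun setT f -> measurable [set z | f z < c].
Proof.
move=> mf; have := mpre `]-oo, c[ mf.
by congr measurable; apply/seteqP; split => z /=; rewrite in_itv.
Qed.
Lemma mge (f : (R * R)%type -> R) (c : R) : measurable_fun setT f -> measurable [set z | c <= f z].
Proof.
move=> mf; have := mpre `[c, +oo[ mf.
by congr measurable; apply/seteqP; split => z /=; rewrite in_itv /= andbT.
Qed.
Lemma mgt (f : (R * R)%type -> R) (c : R) : measurable_fun setT f -> measurable [set z | c < f z].
Proof.
move=> mf; have := mpre `]c, +oo[ mf.
by congr measurable; apply/seteqP; split => z /=; rewrite in_itv /= andbT.
Qed.

Lemma mand (P Q : (R * R)%type -> bool) :
  measurable [set z | P z] -> measurable [set z | Q z] ->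
  measurable [set z | P z && Q z].
Proof.
move=> mP mQ; have := measurableI _ _ mP mQ.
congr measurable; apply/seteqP; split => z /=; first by move=> [-> ->].
by case/andP => -> ->.
Qed.

Lemma mfst : measurable_fun setT (fun z : (R * R)%type => z.1).
Proof. exact: measurable_fst. Qed.
Lemma msnd : measurable_fun setT (fun z : (R * R)%type => z.2).
Proof. exact: measurable_snd. Qed.
Lemma msum : measurable_fun setT (fun z : (R * R)%type => z.1 + z.2).
Proof. exact: measurable_funD. Qed.

Variable b : R.
Lemma m_inE0 : measurable [set z | inE0 b z].
Proof.
by rewrite /inE0; repeat apply: mand; (apply: mle || apply: mlt || apply: mge || apply: mgt);
  (exact: mfst || exact: msnd || exact: msum).
Qed.
End MeasR.
Section MeasR2.
Variable (R : realType) (b : R).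
Implicit Types z : (R * R)%type.

Ltac mtac := by repeat apply: mand; (apply: mle || apply: mlt || apply: mge || apply: mgt);
  (exact: mfst || exact: msnd || exact: msum).
Lemma m_inE1 : measurable [set z | inE1 b z]. Proof. rewrite /inE1; mtac. Qed.
Lemma m_inE2 : measurable [set z | inE2 b z]. Proof. rewrite /inE2; mtac. Qed.
Lemma m_inC01 : measurable [set z | inC01 b z]. Proof. rewrite /inC01; mtac. Qed.
Lemma m_inC12 : measurable [set z | inC12 b z]. Proof. rewrite /inC12; mtac. Qed.
Lemma m_inC02 : measurable [set z | inC02 b z]. Proof. rewrite /inC02; mtac. Qed.
Lemma m_inC012 : measurable [set z | inC012 b z]. Proof. rewrite /inC012; mtac. Qed.

Lemma mif (P : (R * R)%type -> bool) (x : nat) (g : (R * R)%type -> nat) :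
  measurable [set z | P z] -> (forall r, measurable [set z | g z = r]) ->
  forall r, measurable [set z | (if P z then x else g z) = r].
Proof.
move=> mP mg r.
have mnP : measurable [set z | ~~ P z].
  by rewrite (_ : [set z | ~~ P z] = ~` [set z | P z]); [exact: measurableC|
    apply/seteqP; split => z /=; [move/negP|move/negP]].
have [xr|xr] := eqVneq x r.
  have := measurableU _ _ mP (measurableI _ _ mnP (mg r)).
  congr measurable; apply/seteqP; split => z /=.
    by case=> [->//|[/negbTE -> ->]].
  by case: (P z) => /= H; [left|right].
have := measurableI _ _ mnP (mg r).
congr measurable; apply/seteqP; split => z /=.
  by case=> /negbTE ->.
by case: (P z) => /= H; [move: xr; rewrite H eqxx|].
Qed.

Lemma mreg r : measurable [set z | reg b z = r].
Proof.
rewrite /reg; move: r.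
apply: mif; first exact: m_inE0.
apply: mif; first exact: m_inE1.
apply: mif; first exact: m_inE2.
apply: mif; first exact: m_inC01.
apply: mif; first exact: m_inC12.
apply: mif; first exact: m_inC02.
apply: mif; first exact: m_inC012.
move=> r; have [->|nr] := eqVneq 7%N r.
  have : measurable (@setT (R * R)%type) by [].
  by congr measurable; apply/seteqP; split.
have : measurable (@set0 (R * R)%type) by [].
by congr measurable; apply/seteqP; split => z //= /eqP; rewrite (negbTE nr).
Qed.

Lemma mbmap (v : (R * R)%type) : measurable_fun setT (fun z => bmap b z v).
Proof.
apply: measurable_fun_pair => /=.
  apply: measurable_funB; last exact: measurable_cst.
  by apply: measurable_funM; [exact: measurable_cst|exact: mfst].
apply: measurable_funB; last exact: measurable_cst.
by apply: measurable_funM; [exact: measurable_cst|exact: msnd].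
Qed.

Lemma mpreT (d : measure_display) (T U : measurableType d) (f : T -> U) (B : set U) :
  measurable_fun setT f -> measurable B -> measurable (f @^-1` B).
Proof. by move=> mf mB; rewrite -[X in measurable X]setTI; apply: mf. Qed.

End MeasR2.
Section SigOps.
Variables (T : Type) (G : set (set T)).
Local Notation S := (<<s G >>).
Lemma sigT : S setT.
Proof.
have h := @sigma_algebraCD _ setT G set0 (@sigma_algebra0 _ setT G).
by rewrite setD0 in h.
Qed.
Lemma sigC A : S A -> S (~` A).
Proof. by move=> SA; have h := @sigma_algebraCD _ setT G A SA; rewrite setTD in h. Qed.
Lemma sigU A B : S A -> S B -> S (A `|` B).
Proof.
move=> SA SB; rewrite -(bigcup2E A B); apply: sigma_algebra_bigcup => -[|[|i]] //=.
exact: (@sigma_algebra0 _ setT G).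
Qed.
Lemma sigI A B : S A -> S B -> S (A `&` B).
Proof.
move=> SA SB; rewrite -[A `&` B]setCK setCI; apply: sigC; apply: sigU; exact: sigC.
Qed.
Lemma sigbigU (I : Type) (s : seq I) (P : pred I) (F : I -> set T) :
  (forall i, S (F i)) -> S (\big[setU/set0]_(i <- s | P i) F i).
Proof.
move=> SF; elim/big_ind: _ => //; [exact: sigma_algebra0|exact: sigU].
Qed.
End SigOps.

Definition cylN (A : Type) (n : nat) (f : nat -> A) : set (nat -> A) :=
  [set w | forall i, (i < n)%N -> w i = f i].
Definition cyls (A : Type) : set (set (nat -> A)) :=
  [set C | exists n f, C = cylN n f].

Lemma cylN_coord (A : Type) n (f : nat -> A) : <<s @coord_sets A >> (cylN n f).
Proof.
elim: n => [|n IH].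
  rewrite (_ : cylN 0 f = setT); first exact: sigT.
  by apply/seteqP; split => w //= _ i.
rewrite (_ : cylN n.+1 f = cylN n f `&` [set w | w n = f n]).
  apply: sigI => //; apply: sub_sigma_algebra; by exists n, (f n).
apply/seteqP; split => w /=.
  by move=> h; split; [move=> i lt; apply: h; rewrite ltnS ltnW|apply: h].
move=> [h1 h2] i; rewrite ltnS leq_eqVlt => /orP[/eqP ->//|]; exact: h1.
Qed.

Lemma coord_cyl (A : finType) n (a : A) : <<s @cyls A >> [set w | w n = a].
Proof.
rewrite (_ : [set w | w n = a] = \big[setU/set0]_(g <- enum {ffun 'I_n.+1 -> A} | g ord_max == a)
   cylN n.+1 (fun i => g (inord i))).
  by apply: sigbigU => g; apply: sub_sigma_algebra; eexists; eexists.
rewrite -bigcup_seq_cond; apply/seteqP; split => w /=.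
  move=> wn; exists [ffun i : 'I_n.+1 => w (val i)].
    by rewrite /= mem_enum /= ffunE /= wn eqxx.
  by move=> i lt /=; rewrite ffunE inordK.
move=> [g /andP[_ /eqP ga] hw]; rewrite hw //.
by rewrite (_ : inord n = ord_max) // ; apply: val_inj; rewrite /= inordK.
Qed.

Lemma gen_cyl (A : finType) : <<s @coord_sets A >> = <<s @cyls A >>.
Proof.
rewrite eqEsubset; split.
  apply: (smallest_sub (@smallest_sigma_algebra _ setT _)).
  by move=> _ [n [a ->]]; exact (coord_cyl n a).
apply: (smallest_sub (@smallest_sigma_algebra _ setT _)).
by move=> _ [n [f ->]]; exact (cylN_coord n f).
Qed.

Lemma cylI (A : Type) n f n' f' :
  cylN n f `&` cylN n' f' = set0 \/ exists n'' (f'' : nat -> A), cylN n f `&` cylN n' f' = cylN n'' f''.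
Proof.
wlog nn : n f n' f' / (n <= n')%N.
  move=> H; have [nn|/ltnW nn] := leqP n n'; first exact: H.
  have [h|[n'' [f'' h]]] := H n' f' n f nn; [left|right; exists n'', f'']; by rewrite setIC.
have [H|H] := pselect (forall i, (i < n)%N -> f i = f' i).
  right; exists n', f'; apply/seteqP; split => w /=; first by case.
  move=> h; split => // i lt; rewrite H // h //; exact: leq_trans lt nn.
left; apply/seteqP; split => // w [/= h1 h2]; apply: H => i lt.
by rewrite -h1 // h2 //; exact: leq_trans lt nn.
Qed.

Definition ccons (A : Type) (x : A) (f : nat -> A) (i : nat) : A :=
  if i is k.+1 then f k else x.

Lemma cyl_cons (A : Type) (x : A) n f :
  [set w | w 0%N = x /\ cylN n f (Defs.shift w)] = cylN n.+1 (ccons x f).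
Proof.
apply/seteqP; split => w /=.
  by move=> [w0 h] [|i] //= lt; apply: h.
move=> h; split; first exact: h.
by move=> i lt; apply: (h i.+1).
Qed.

Lemma cyl_meas (R : realType) (A : Type) (wt : A -> R) (m : set (nat -> A) -> \bar R) n f :
  is_product_measure wt m -> m (cylN n f) = (\prod_(i < n) wt (f i))%:E.
Proof.
move=> hm; rewrite -(hm n (fun i => f i)); congr m.
apply/seteqP; split => w /=; first by move=> h i; apply: h.
by move=> h i lt; apply: (h (Ordinal lt)).
Qed.

Lemma prod_cons (R : realType) (A : Type) (wt : A -> R) x n f :
  \prod_(i < n.+1) wt (ccons x f i) = wt x * \prod_(i < n) wt (f i).
Proof. by rewrite big_ord_recl. Qed.
Lemma gen_prod d1 d2 (T1 : measurableType d1) (T2 : measurableType d2)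
    (G1 : set (set T1)) (G2 : set (set T2)) :
  @measurable _ T1 = <<s G1 >> -> @measurable _ T2 = <<s G2 >> ->
  G1 setT -> G2 setT ->
  @measurable _ (T1 * T2)%type = <<s [set A `*` B | A in G1 & B in G2] >>.
Proof.
move=> h1 h2 g1 g2.
set G := [set A `*` B | A in G1 & B in G2].
have GS : forall A B, G1 A -> G2 B -> <<s G >> (A `*` B).
  by move=> A B ? ?; apply: sub_sigma_algebra; exists A => //; exists B.
rewrite measurable_prod_measurableType eqEsubset; split; last first.
  apply: (smallest_sub (@smallest_sigma_algebra _ setT _)).
  move=> _ [A GA [B GB <-]]; apply: sub_sigma_algebra; exists A.
    by rewrite h1; apply: sub_sigma_algebra.
  by exists B => //; rewrite h2; apply: sub_sigma_algebra.
have stepa : forall B, G2 B -> forall A, measurable A -> <<s G >> (A `*` B).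
  move=> B GB; rewrite h1.
  apply: (smallest_sub (C := sigma_algebra setT) (X := [set A | <<s G >> (A `*` B)])).
    split => /=.
    - rewrite set0X; exact: (@sigma_algebra0 _ setT G).
    - move=> A SA; rewrite setTD.
      have -> : (~` A) `*` B = (setT `*` B) `&` ~` (A `*` B).
        by apply/seteqP; split => -[x y] /=; [move=> [nA Bx]; split => //; case|
          move=> [[_ By] nAB]; split => // Ax; apply: nAB].
      apply: sigI; [exact: GS|exact: sigC].
    - move=> F SF; rewrite setX_bigcupl; exact: sigma_algebra_bigcup.
  by move=> A GA; exact: GS.
apply: (smallest_sub (@smallest_sigma_algebra _ setT _)).
move=> _ [A mA [B mB <-]]; move: B mB; rewrite h2.
apply: (smallest_sub (C := sigma_algebra setT) (X := [set B | <<s G >> (A `*` B)])).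
  split => /=.
  - rewrite setX0; exact: (@sigma_algebra0 _ setT G).
  - move=> B SB; rewrite setTD.
    have -> : A `*` (~` B) = (A `*` setT) `&` ~` (A `*` B).
      by apply/seteqP; split => -[x y] /=; [move=> [Ax nB]; split => //; case|
        move=> [[Ax _] nAB]; split => // By; apply: nAB].
    apply: sigI; [exact: stepa|exact: sigC].
  - move=> F SF; rewrite setX_bigcupr; exact: sigma_algebra_bigcup.
by move=> B GB; exact: stepa.
Qed.
Lemma mcoordO n (a : bool) : measurable [set w : Omega | w n = a].
Proof. by apply: sub_sigma_algebra; exists n, a. Qed.
Lemma mcoordU n (a : 'I_3) : measurable [set w : Upsilon | w n = a].
Proof. by apply: sub_sigma_algebra; exists n, a. Qed.
Lemma genO : @measurable _ Omega = <<s @cyls bool >>.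
Proof. exact: gen_cyl. Qed.
Lemma genU : @measurable _ Upsilon = <<s @cyls 'I_3 >>.
Proof. exact: gen_cyl. Qed.
Lemma mcylO n f : measurable (cylN n f : set Omega).
Proof. by rewrite genO; apply: sub_sigma_algebra; exists n, f. Qed.
Lemma mcylU n f : measurable (cylN n f : set Upsilon).
Proof. by rewrite genU; apply: sub_sigma_algebra; exists n, f. Qed.

Definition G12 : set (set (Omega * Upsilon)) :=
  [set C1 `*` C2 | C1 in @cyls bool & C2 in @cyls 'I_3].
Definition G3 (R : realType) : set (set (Omega * Upsilon * (R * R))) :=
  [set X `*` B | X in G12 & B in measurable].

Lemma cylT (A : Type) (a : A) : @cyls A setT.
Proof. by exists 0%N, (fun _ => a); apply/seteqP; split => w. Qed.

Lemma gen12 : @measurable _ (Omega * Upsilon)%type = <<s G12 >>.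
Proof. exact: (gen_prod genO genU (cylT true) (cylT ord0)). Qed.

Lemma gen3 (R : realType) :
  @measurable _ (Omega * Upsilon * (R * R))%type = <<s @G3 R >>.
Proof.
apply: (gen_prod gen12).
- by rewrite smallest_id //; exact: sigma_algebra_measurable.
- by exists setT; [exact: cylT true|exists setT; [exact: cylT ord0|exact: setXTT]].
- by [].
Qed.

Lemma G3I (R : realType) : setI_closed (@G3 R).
Proof.
move=> _ _ [_ [_ [n1 [f1 ->]] [_ [n2 [f2 ->]] <-]] [B mB <-]]
  [_ [_ [n1' [f1' ->]] [_ [n2' [f2' ->]] <-]] [B' mB' <-]].
rewrite -!setXI.
have [h1|[n'' [f'' h1]]] := cylI n1 f1 n1' f1'.
  exists (cylN n1 f1 `*` cylN n2 f2); first by exists (cylN n1 f1); [exists n1, f1|exists (cylN n2 f2) => //; exists n2, f2].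
  by exists set0 => //; rewrite setX0 h1 !set0X.
have [h2|[m'' [g'' h2]]] := cylI n2 f2 n2' f2'.
  exists (cylN n1 f1 `*` cylN n2 f2); first by exists (cylN n1 f1); [exists n1, f1|exists (cylN n2 f2) => //; exists n2, f2].
  by exists set0 => //; rewrite setX0 h2 setX0 set0X.
rewrite h1 h2; exists (cylN n'' f'' `*` cylN m'' g'').
  by exists (cylN n'' f''); [exists n'', f''|exists (cylN m'' g'') => //; exists m'', g''].
by exists (B `&` B') => //; exact: measurableI.
Qed.
Section GenMeas.
Local Open Scope ereal_scope.
Context d (T : measurableType d) (R : realType) (P : {measure set T -> \bar R}).

Lemma split2 (E Z : set T) : measurable Z -> measurable E ->
  P Z = P (Z `&` E) + P (Z `&` ~` E).
Proof.
move=> mZ mE; rewrite -measureU.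
- by apply: congr1; rewrite -setIUr setUCr setIT.
- exact: measurableI.
- by apply: measurableI => //; exact: measurableC.
- by rewrite setIACA setICr setI0.
Qed.

Lemma decomp8 (g : T -> nat) : (forall r, measurable [set x | g x = r]) ->
  (forall x, (g x < 8)%N) -> forall Y, measurable Y ->
  P Y = \sum_(r < 8) P (Y `&` [set x | g x = r]).
Proof.
move=> mg g8 Y mY.
transitivity (P (\big[setU/set0]_(r < 8%N) (Y `&` [set x | g x = r]))).
  apply: congr1; rewrite -(bigcup_mkord 8 (fun r => Y `&` [set x | g x = r])); apply/seteqP; split => x.
    by move=> Yx; exists (g x) => //=; exact: g8.
  by case=> k _ [].
have h1 : forall k, measurable (Y `&` [set x | g x = k]) by move=> k; apply: measurableI.
have h2 : trivIset setT (fun r => Y `&` [set x | g x = r]) by move=> i j _ _ [x [[_ <-] [_ <-]]].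
have h3 : measurable (\big[setU/set0]_(r < 8%N) (Y `&` [set x | g x = r])).
  by rewrite -(bigcup_mkord 8 (fun r => Y `&` [set x | g x = r])); apply: bigcup_measurable => k _; apply: measurableI.
have := @measure_semi_additive _ _ _ P (fun r => Y `&` [set x | g x = r]) 8%N h1 h2 h3.
by [].
Qed.
End GenMeas.
Definition o0 : 'I_3 := @Ordinal 3 0 isT.
Definition o1 : 'I_3 := @Ordinal 3 1 isT.
Definition o2 : 'I_3 := @Ordinal 3 2 isT.

Definition sixE (R : realType) (g : bool -> 'I_3 -> \bar R) : \bar R :=
  (g false o0 + g false o1 + g false o2 + g true o0 + g true o1 + g true o2)%E.
Definition sixR (R : realType) (g : bool -> 'I_3 -> R) : R :=
  g false o0 + g false o1 + g false o2 + g true o0 + g true o1 + g true o2.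
Lemma sixEFin (R : realType) (g : bool -> 'I_3 -> R) :
  sixE (fun bb j => (g bb j)%:E) = (sixR g)%:E.
Proof. by rewrite /sixE /sixR !EFinD. Qed.

Section Decomp.
Local Open Scope ereal_scope.
Context (R : realType) (b : R) (P : {measure set (TT R) -> \bar R}).

Definition Dset r bb (j : 'I_3) : set (TT R) :=
  [set x | reg b x.2 = r /\ x.1.1 0%N = bb /\ x.1.2 0%N = j].

Lemma mDreg r : measurable [set x : TT R | reg b x.2 = r].
Proof.
have -> : [set x : TT R | reg b x.2 = r] = setT `*` [set z | reg b z = r].
  by apply/seteqP; split => x /=; [|case].
exact: measurableX (mreg b r).
Qed.
Lemma mOb bb : measurable [set x : TT R | x.1.1 0%N = bb].
Proof.
have -> : [set x : TT R | x.1.1 0%N = bb] = ([set w : Omega | w 0%N = bb] `*` setT) `*` setT.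
  by apply/seteqP; split => x /=; [|case; case].
apply: measurableX => //; apply: measurableX => //; exact: mcoordO.
Qed.
Lemma mUj j : measurable [set x : TT R | x.1.2 0%N = j].
Proof.
have -> : [set x : TT R | x.1.2 0%N = j] = (setT `*` [set w : Upsilon | w 0%N = j]) `*` setT.
  by apply/seteqP; split => x /=; [|case; case].
apply: measurableX => //; apply: measurableX => //; exact: mcoordU.
Qed.

Lemma decompTT Y : measurable Y ->
  P Y = \sum_(r < 8%N) sixE (fun bb j => P (Y `&` Dset r bb j)).
Proof.
move=> mY; rewrite (decomp8 P (g := fun x : TT R => reg b x.2)) //; last first.
  by move=> x; exact: reg_lt8.
  exact: mDreg.
apply: eq_bigr => r _.
set Z := Y `&` _.
have mZ : measurable Z by apply: measurableI => //; exact: mDreg.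
rewrite (split2 P (E := [set x : TT R | x.1.1 0%N = true])) //; last exact: mOb.
have ct : ~` [set x : TT R | x.1.1 0%N = true] = [set x : TT R | x.1.1 0%N = false].
  by apply/seteqP; split => x /=; case: (x.1.1 0%N).
rewrite ct.
have s3 : forall W, measurable W -> P W = P (W `&` [set x : TT R | x.1.2 0%N = o0]) +
   P (W `&` [set x : TT R | x.1.2 0%N = o1]) + P (W `&` [set x : TT R | x.1.2 0%N = o2]).
  move=> W mW; rewrite (split2 P (E := [set x : TT R | x.1.2 0%N = o0])) //; last exact: mUj.
  rewrite (split2 P (Z := W `&` ~` [set x : TT R | x.1.2 0%N = o0]) (E := [set x : TT R | x.1.2 0%N = o1])); last 2 first.
    by apply: measurableI => //; apply: measurableC; exact: mUj.
    exact: mUj.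
  rewrite addeA; congr (_ + _ + _); apply: congr1; apply/seteqP; split => x /=.
  - by move=> [[Wx _] ?].
  - by move=> [Wx ->].
  - move=> [[Wx h0] h1]; split => //; move: h0 h1; case: (x.1.2 0%N) => -[|[|[|//]]] pf /= h0 h1.
    + by exfalso; apply: h0; exact: val_inj.
    + by exfalso; apply: h1; exact: val_inj.
    + exact: val_inj.
  - by move=> [Wx h]; rewrite h; do !split => //; apply/eqP.
rewrite addeC (s3 _ (measurableI _ _ mZ (mOb false))) (s3 _ (measurableI _ _ mZ (mOb true))) /sixE !addeA.
by congr (_ + _ + _ + _ + _ + _); apply: congr1; apply/seteqP; split => x /=;
  (move=> [[[? ?] ?] ?] || move=> [? [? [? ?]]]).
Qed.
End Decomp.
Section HG.
Context (R : realType) (b : R).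
Definition hG (s1 s2 s3 : nat -> bool) (io : nat -> bool -> 'I_3 -> nat) r bb j (x : TT R) : TT R :=
  let: (om, up, z) := x in
  (if s1 r then Defs.shift om else om, if s2 r then Defs.shift up else up,
   if s3 r then z else bmap b z (q R (io r bb j))).

Definition ioK (r : nat) bb j := aidx (kk bb j) r.

Lemma Kmap_hG x : Kmap b x = hG sOm (fun r => eqn r 6) (fun r => eqn r 7) ioK
  (reg b x.2) (x.1.1 0%N) (x.1.2 0%N) x.
Proof. by rewrite Kmap_h; case: x => [[om up] z]. Qed.
Lemma Rmap_hG x : Rmap b x = hG xpredT xpredT xpred0 ioK
  (reg b x.2) (x.1.1 0%N) (x.1.2 0%N) x.
Proof. by rewrite Rmap_h; case: x => [[om up] z]. Qed.

End HG.

Lemma mshiftO : measurable_fun setT (fun w : Omega => (Defs.shift w : Omega)).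
Proof.
refine (@measurability _ _ Omega Omega setT _ (@coord_sets bool) _ _) => //.
move=> _ [_ [n [a ->]] <-]; rewrite setTI.
by apply: sub_sigma_algebra; exists n.+1, a.
Qed.
Lemma mshiftU : measurable_fun setT (fun w : Upsilon => (Defs.shift w : Upsilon)).
Proof.
refine (@measurability _ _ Upsilon Upsilon setT _ (@coord_sets 'I_3) _ _) => //.
move=> _ [_ [n [a ->]] <-]; rewrite setTI.
by apply: sub_sigma_algebra; exists n.+1, a.
Qed.

Section MeasMaps.
Context (R : realType) (b : R).

Lemma mff : measurable_fun setT (fun x : TT R => x.1.1).
Proof. exact: measurableT_comp measurable_fst measurable_fst. Qed.
Lemma msf : measurable_fun setT (fun x : TT R => x.1.2).
Proof. exact: measurableT_comp measurable_snd measurable_fst. Qed.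
Lemma ms : measurable_fun setT (fun x : TT R => x.2).
Proof. exact: measurable_snd. Qed.

Lemma mhG s1 s2 s3 io r bb j : measurable_fun setT (hG b s1 s2 s3 io r bb j).
Proof.
have -> : hG b s1 s2 s3 io r bb j = (fun x : TT R =>
   ((if s1 r then (Defs.shift x.1.1 : Omega) else x.1.1),
    (if s2 r then (Defs.shift x.1.2 : Upsilon) else x.1.2),
    if s3 r then x.2 else bmap b x.2 (q R (io r bb j)))).
  by apply: funext => -[[om up] z].
apply: measurable_fun_pair; first apply: measurable_fun_pair.
- case: (s1 r); last exact: mff.
  exact: measurableT_comp mshiftO mff.
- case: (s2 r); last exact: msf.
  exact: measurableT_comp mshiftU msf.
- case: (s3 r); first exact: ms.
  exact: measurableT_comp (mbmap _ _) ms.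
Qed.

Lemma mDset r bb j : measurable (Dset b r bb j).
Proof.
have -> : Dset b r bb j = [set x : TT R | reg b x.2 = r] `&`
   ([set x : TT R | x.1.1 0%N = bb] `&` [set x : TT R | x.1.2 0%N = j]) by [].
apply: measurableI; first exact: mDreg.
apply: measurableI; [exact: mOb|exact: mUj].
Qed.

Lemma mF (F : TT R -> TT R) s1 s2 s3 io
  (hF : forall x : TT R, F x = hG b s1 s2 s3 io (reg b x.2) (x.1.1 0%N) (x.1.2 0%N) x) :
  measurable_fun setT F.
Proof.
move=> _ Y mY; rewrite setTI.
have -> : F @^-1` Y = \bigcup_r \bigcup_(bb in setT) \bigcup_(j in setT)
    (Dset b r bb j `&` hG b s1 s2 s3 io r bb j @^-1` Y).
  apply/seteqP; split => x /=.
    by rewrite hF => h; exists (reg b x.2) => //; exists (x.1.1 0%N) => //; exists (x.1.2 0%N).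
  by case=> r _ [bb _ [j _ [[hr [hb hj]] /=]]]; rewrite hF hr hb hj.
apply: bigcupT_measurable => r.
apply: fin_bigcup_measurable; first exact: finite_finset.
move=> bb _; apply: fin_bigcup_measurable; first exact: finite_finset.
move=> j _; apply: measurableI; first exact: mDset.
exact: mpreT (mhG _ _ _ _ _ _ _) mY.
Qed.
End MeasMaps.
Section Pieces.
Local Open Scope ereal_scope.
Context (R : realType) (b p s t : R).
Context (m1 : probability Omega R) (m2 : probability Upsilon R) (mu : probability (R * R)%type R).
Hypothesis hm1 : is_product_measure (wt1 p) m1.
Hypothesis hm2 : is_product_measure (wt2 s t) m2.
Context (n1 : nat) (f1 : nat -> bool) (n2 : nat) (f2 : nat -> 'I_3) (B : set (R * R)).
Hypothesis mB : measurable B.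

Definition X1s (sh : bool) bb : set Omega :=
  [set w | w 0%N = bb /\ cylN n1 f1 (if sh then Defs.shift w else w)].
Definition X2s (sh : bool) j : set Upsilon :=
  [set w | w 0%N = j /\ cylN n2 f2 (if sh then Defs.shift w else w)].
Definition Zs r i (c : bool) : set (R * R) :=
  [set z | reg b z = r] `&` (if c then B else (fun z => bmap b z (q R i)) @^-1` B).

Lemma piece_set (F : TT R -> TT R) s1 s2 s3 io
  (hF : forall x : TT R, F x = hG b s1 s2 s3 io (reg b x.2) (x.1.1 0%N) (x.1.2 0%N) x) r bb j :
  F @^-1` ((cylN n1 f1 `*` cylN n2 f2) `*` B) `&` Dset b r bb j =
  (X1s (s1 r) bb `*` X2s (s2 r) j) `*` Zs r (io r bb j) (s3 r).
Proof.
apply/seteqP; split => -[[om up] z]; rewrite /Dset /= hF /=.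
  move=> [[[h1 h2] h3] [hr [hb hj]]]; rewrite -hr -hb -hj /X1s /X2s /Zs /=.
  by do !split => //; case: (s3 (reg b z)) h3.
rewrite /X1s /X2s /Zs /=.
move=> [[[hb h1] [hj h2]] [hr h3]]; rewrite -hr -hb -hj in h1 h2 h3 *.
by do !split => //; case: (s3 (reg b z)) h3.
Qed.

Lemma mX1s sh bb : measurable (X1s sh bb).
Proof.
case: sh.
  rewrite /X1s (cyl_cons bb n1 f1); exact: mcylO.
have -> : X1s false bb = [set w : Omega | w 0%N = bb] `&` cylN n1 f1 by [].
apply: measurableI; [exact: mcoordO|exact: mcylO].
Qed.
Lemma mX2s sh j : measurable (X2s sh j).
Proof.
case: sh.
  rewrite /X2s (cyl_cons j n2 f2); exact: mcylU.
have -> : X2s false j = [set w : Upsilon | w 0%N = j] `&` cylN n2 f2 by [].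
apply: measurableI; [exact: mcoordU|exact: mcylU].
Qed.
Lemma mZs r i c : measurable (Zs r i c).
Proof.
apply: measurableI; first exact: mreg.
case: c => //; apply: mpreT => //; exact: mbmap.
Qed.

Lemma fineE d (T : measurableType d) (m : probability T R) (A : set T) :
  measurable A -> m A = (fine (m A))%:E.
Proof. by move=> mA; rewrite fineK // fin_num_measure. Qed.

Definition c1 := (\prod_(i < n1) wt1 p (f1 i))%R.
Definition c2 := (\prod_(i < n2) wt2 s t (f2 i))%R.
Definition X1v (sh : bool) bb : R := if sh then (wt1 p bb * c1)%R else fine (m1 (X1s false bb)).
Definition X2v (sh : bool) j : R := if sh then (wt2 s t j * c2)%R else fine (m2 (X2s false j)).

Lemma m1X1 sh bb : m1 (X1s sh bb) = (X1v sh bb)%:E.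
Proof.
case: sh; last exact: fineE (mX1s _ _).
by rewrite /X1s (cyl_cons bb n1 f1) (cyl_meas _ _ hm1) prod_cons.
Qed.
Lemma m2X2 sh j : m2 (X2s sh j) = (X2v sh j)%:E.
Proof.
case: sh; last exact: fineE (mX2s _ _).
by rewrite /X2s (cyl_cons j n2 f2) (cyl_meas _ _ hm2) prod_cons.
Qed.

Lemma piece_val (F : TT R -> TT R) s1 s2 s3 io
  (hF : forall x : TT R, F x = hG b s1 s2 s3 io (reg b x.2) (x.1.1 0%N) (x.1.2 0%N) x) r bb j :
  ((m1 \x m2) \x mu) (F @^-1` ((cylN n1 f1 `*` cylN n2 f2) `*` B) `&` Dset b r bb j) =
  (X1v (s1 r) bb * X2v (s2 r) j * fine (mu (Zs r (io r bb j) (s3 r))))%:E.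
Proof.
have h12 : measurable (X1s (s1 r) bb `*` X2s (s2 r) j).
  by apply: measurableX; [exact: mX1s|exact: mX2s].
rewrite (piece_set hF) (@product_measure1E _ _ _ _ _ (m1 \x m2)%E mu _ _ h12 (mZs _ _ _)).
transitivity ((m1 (X1s (s1 r) bb) * m2 (X2s (s2 r) j)) * mu (Zs r (io r bb j) (s3 r))).
  by congr (_ * _); exact: (@product_measure1E _ _ _ _ _ m1 m2 _ _ (mX1s _ _) (mX2s _ _)).
by rewrite m1X1 m2X2 (fineE mu (mZs _ _ _)) -!EFinM.
Qed.

Lemma c1E : m1 (cylN n1 f1) = c1%:E.
Proof. exact: (cyl_meas _ _ hm1). Qed.
Lemma c2E : m2 (cylN n2 f2) = c2%:E.
Proof. exact: (cyl_meas _ _ hm2). Qed.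

Lemma xsum : (X1v false false + X1v false true)%R = c1.
Proof.
apply: EFin_inj; rewrite EFinD -!m1X1 -c1E.
rewrite (split2 m1 (Z := cylN n1 f1) (E := [set w : Omega | w 0%N = true])); [|exact: mcylO|exact: mcoordO].
rewrite addeC; congr (_ + _); apply: congr1; apply/seteqP; split => w /=;
  first [by move=> [h1 h2]; split | by move=> [-> h]; split | 
         by move=> [h1 h2]; split => //; move: h2; case: (w 0%N)].
Qed.

Lemma ysum : (X2v false o0 + X2v false o1 + X2v false o2)%R = c2.
Proof.
apply: EFin_inj; rewrite !EFinD -!m2X2 -c2E.
rewrite (split2 m2 (Z := cylN n2 f2) (E := [set w : Upsilon | w 0%N = o0])); [|exact: mcylU|exact: mcoordU].
rewrite (split2 m2 (Z := cylN n2 f2 `&` ~` [set w : Upsilon | w 0%N = o0]) (E := [set w : Upsilon | w 0%N = o1])); last 2 first.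
  by apply: measurableI; [exact: mcylU|apply: measurableC; exact: mcoordU].
  exact: mcoordU.
rewrite addeA; congr (_ + _ + _); apply: congr1; apply/seteqP; split => w /=.
- by move=> [? ?]; split.
- by move=> [? ?]; split.
- by move=> [-> ?]; split.
- by move=> [[? ?] ?]; split.
- by move=> [h ?]; rewrite h; do !split => //; apply/eqP.
- move=> [[h0 h1] h2]; split => //; move: h1 h2; case: (w 0%N) => -[|[|[|//]]] pf /= h1 h2.
  + by exfalso; apply: h1; exact: val_inj.
  + by exfalso; apply: h2; exact: val_inj.
  + exact: val_inj.
Qed.

Hypothesis hmu : mu (~` S_beta b) = 0.

Lemma mS : measurable (S_beta b).
Proof.
have -> : S_beta b = [set z : (R * R)%type | (0 <= z.1)%R] `&` ([set z : (R * R)%type | (0 <= z.2)%R] `&` [set z : (R * R)%type | (z.1 + z.2 <= (b - 1)^-1)%R]).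
  by [].
apply: measurableI; first exact: (mge 0%R (@mfst R)).
apply: measurableI; [exact: (mge 0%R (@msnd R))|exact: (mle _ (@msum R))].
Qed.

Lemma Zs7 i c : fine (mu (Zs 7 i c)) = 0%R.
Proof.
rewrite (subset_measure0 (mZs _ _ _) (measurableC mS) _ hmu) //.
move=> z [/= hr _] Sz; move: (reg7 Sz); by rewrite hr.
Qed.

Lemma tau_dec k : mu (tau b k @^-1` B) = (\sum_(r < 8%N) fine (mu (Zs r (aidx k r) false)))%:E.
Proof.
have mT : forall r, measurable (tau b k @^-1` B `&` [set z | reg b z = r]).
  move=> r; rewrite (_ : _ `&` _ = Zs r (aidx k r) false); first exact: mZs.
  by rewrite /Zs setIC; apply/seteqP; split => z /= [hr h]; split => //; move: h;
    rewrite tau_reg hr.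
rewrite (decomp8 mu (g := reg b)); first last.
- rewrite (_ : tau b k @^-1` B = \bigcup_(r in `I_8) (tau b k @^-1` B `&` [set z | reg b z = r])).
    by apply: bigcup_measurable => r _; exact: mT.
  apply/seteqP; split => z /=; last by case=> r _ [].
  by move=> h; exists (reg b z) => //; exact: reg_lt8.
- exact: reg_lt8.
- exact: mreg.
rewrite -sumEFin; apply: eq_bigr => r _.
rewrite -fineE; last exact: mZs.
apply: congr1; rewrite /Zs setIC; apply/seteqP; split => z /= [hr h]; split => //; move: h;
  by rewrite tau_reg hr.
Qed.

Context (nu : probability (R * R)%type R).
Hypothesis hnuB : nu B = ((p * s)%:E * mu (tau b 1 @^-1` B)
           + (p * t)%:E * mu (tau b 2 @^-1` B)
           + (p * (1 - s - t))%:E * mu (tau b 3 @^-1` B)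
           + ((1 - p) * s)%:E * mu (tau b 4 @^-1` B)
           + ((1 - p) * t)%:E * mu (tau b 5 @^-1` B)
           + ((1 - p) * (1 - s - t))%:E * mu (tau b 6 @^-1` B)).

Definition Arect : set (TT R) := (cylN n1 f1 `*` cylN n2 f2) `*` B.
Lemma mArect : measurable Arect.
Proof. by apply: measurableX => //; apply: measurableX; [exact: mcylO|exact: mcylU]. Qed.

Lemma rect_F (F : TT R -> TT R) s1 s2 s3 io
  (hF : forall x : TT R, F x = hG b s1 s2 s3 io (reg b x.2) (x.1.1 0%N) (x.1.2 0%N) x) :
  ((m1 \x m2) \x mu) (F @^-1` Arect) =
  (\sum_(r < 8%N) sixR (fun bb j => X1v (s1 r) bb * X2v (s2 r) j *
      fine (mu (Zs r (io r bb j) (s3 r)))))%:E.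
Proof.
rewrite (@decompTT _ b ((m1 \x m2) \x mu)%E _ (mpreT (mF hF) mArect)) -sumEFin; apply: eq_bigr => r _.
rewrite -sixEFin; apply: congr1; apply: funext => bb; apply: funext => j.
exact: piece_val.
Qed.

Definition Tk k := (\sum_(r < 8%N) fine (mu (Zs r (aidx k r) false)))%R.

Lemma rhs_val : ((m1 \x m2) \x nu) Arect =
  (c1 * c2 * (p * s * Tk 1 + p * t * Tk 2 + p * (1 - s - t) * Tk 3
     + (1 - p) * s * Tk 4 + (1 - p) * t * Tk 5 + (1 - p) * (1 - s - t) * Tk 6))%:E.
Proof.
have h12 : measurable (cylN n1 f1 `*` cylN n2 f2 : set (Omega * Upsilon)).
  by apply: measurableX; [exact: mcylO|exact: mcylU].
rewrite /Arect (@product_measure1E _ _ _ _ _ (m1 \x m2)%E nu _ _ h12 mB).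
transitivity ((m1 (cylN n1 f1) * m2 (cylN n2 f2)) * nu B).
  by congr (_ * _); exact: (@product_measure1E _ _ _ _ _ m1 m2 _ _ (mcylO _ _) (mcylU _ _)).
by rewrite c1E c2E hnuB !tau_dec -!EFinM.
Qed.

Lemma rectK : ((m1 \x m2) \x mu) (Kmap b @^-1` Arect) = ((m1 \x m2) \x nu) Arect.
Proof.
rewrite (rect_F (@Kmap_hG R b)) rhs_val; congr EFin.
rewrite /Tk !big_ord_recr big_ord0 /= /sixR /X1v /X2v /ioK /= -xsum -ysum /X1v /X2v /= !Zs7.
rewrite !big_ord0 /wt2 /o0 /o1 /o2 /=.
ring.
Qed.

Lemma rectR : ((m1 \x m2) \x mu) (Rmap b @^-1` Arect) = ((m1 \x m2) \x nu) Arect.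
Proof.
rewrite (rect_F (@Rmap_hG R b)) rhs_val; congr EFin.
rewrite /Tk !big_ord_recr big_ord0 /= /sixR /X1v /X2v /ioK /= !Zs7.
rewrite !big_ord0 /wt2 /o0 /o1 /o2 /=.
ring.
Qed.

End Pieces.

Unset Implicit Arguments.
Set Strict Implicit.

Theorem lemma5p6 (R : realType) (beta p s t : R)
  (hb1 : 1 < beta) (hb2 : beta < 3 / 2)
  (hp0 : 0 < p) (hp1 : p < 1) (hs : 0 < s) (ht : 0 < t) (hst : s + t < 1)
  (m1 : probability Omega R) (m2 : probability Upsilon R)
  (hm1 : is_product_measure (wt1 p) m1)
  (hm2 : is_product_measure (wt2 s t) m2)
  (mu : probability (R * R)%type R)
  (hmu : mu (~` S_beta beta) = 0%E)
  (nu : probability (R * R)%type R)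
  (hnu : forall B : set (R * R), measurable B ->
     nu B = ((p * s)%:E * mu (tau beta 1 @^-1` B)
           + (p * t)%:E * mu (tau beta 2 @^-1` B)
           + (p * (1 - s - t))%:E * mu (tau beta 3 @^-1` B)
           + ((1 - p) * s)%:E * mu (tau beta 4 @^-1` B)
           + ((1 - p) * t)%:E * mu (tau beta 5 @^-1` B)
           + ((1 - p) * (1 - s - t))%:E * mu (tau beta 6 @^-1` B))%E) :
  (forall A : set (Omega * Upsilon * (R * R)), measurable A ->
     ((m1 \x m2) \x mu)%E (Kmap beta @^-1` A) = ((m1 \x m2) \x nu)%E A) /\
  (forall A : set (Omega * Upsilon * (R * R)), measurable A ->
     ((m1 \x m2) \x mu)%E (Rmap beta @^-1` A) = ((m1 \x m2) \x nu)%E A).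
Proof.
have key : forall F : TT R -> TT R, measurable_fun setT F ->
    (forall n1 f1 n2 f2 B, measurable B ->
      ((m1 \x m2) \x mu)%E (F @^-1` ((cylN n1 f1 `*` cylN n2 f2) `*` B)) =
      ((m1 \x m2) \x nu)%E ((cylN n1 f1 `*` cylN n2 f2) `*` B)) ->
    forall A : set (TT R), measurable A ->
      ((m1 \x m2) \x mu)%E (F @^-1` A) = ((m1 \x m2) \x nu)%E A.
  move=> F mF hrect A mA.
  pose PF := @measure_function_pushforward__canonical__measure_function_Measure
    _ _ _ _ _ ((m1 \x m2) \x mu)%E F mF.
  have -> : ((m1 \x m2) \x mu)%E (F @^-1` A) = PF A by [].
  apply: (measure_unique (@G3 R) (fun=> setT)) => //.
  - exact: gen3.
  - exact: G3I.
  - move=> _.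
    have : @G3 R ((setT `*` setT) `*` setT).
      exists (setT `*` setT); last by exists setT.
      exists setT; first exact: cylT true.
      by exists setT; first exact: cylT ord0.
    by rewrite !setXTT.
  - by apply/seteqP; split => // x _; exists 0%N.
  - move=> _ [_ [_ [n1 [f1 ->]] [_ [n2 [f2 ->]] <-]] [B mB <-]].
    exact: hrect.
  - move=> _; rewrite /PF /= /pushforward preimage_setT.
    have -> : [set: TT R] = (setT `*` setT) `*` setT by rewrite !setXTT.
    have mTT : measurable (setT `*` setT : set (Omega * Upsilon)) by apply: measurableX.
    rewrite (@product_measure1E _ _ _ _ _ (m1 \x m2)%E mu _ _ mTT measurableT).
    rewrite [X in (X * _)%E](_ : _ = 1%E); last first.
      transitivity (m1 setT * m2 setT)%E.
        exact: (@product_measure1E _ _ _ _ _ m1 m2 _ _ measurableT measurableT).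
      by rewrite (probability_setT m1) (probability_setT m2) mule1.
    rewrite mul1e; apply: (le_lt_trans _ (ltry 1%R)); exact: (probability_le1 mu measurableT).
split.
- apply: key; first exact: mF (@Kmap_hG R beta).
  move=> n1 f1 n2 f2 B mB.
  exact: (rectK hm1 hm2 n1 f1 n2 f2 mB hmu (hnu B mB)).
- apply: key; first exact: mF (@Rmap_hG R beta).
  move=> n1 f1 n2 f2 B mB.
  exact: (rectR hm1 hm2 n1 f1 n2 f2 mB hmu (hnu B mB)).
Qed.
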